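(* Let $A\bowtie^{\theta} I$ be an amalgamated Banach algebra as in the context. If $A\bowtie^{\theta} I$ is weakly amenable, then $A$ is weakly amenable.
   Context: Let $A$ and $B$ be Banach algebras, $\theta:A\to B$ a continuous algebra homomorphism with $\|\theta\|\le 1$, and $I$ a closed two-sided ideal of $B$. The amalgamated Banach algebra $A\bowtie^{\theta} I$ is the Banach space $\{(a,i): a\in A,\ i\in I\}$ with norm $\|(a,i)\|=\|a\|+\|i\|$ and product $(a,i)\cdot(a',i')=(aa',\ \theta(a)i'+i\theta(a')+ii')$. A Banach algebra $C$ is weakly amenable if every bounded derivation $D:C\to C^*$ (i.e. bounded linear with $D(ab)=a\cdot D(b)+D(a)\cdot b$, where $\langle a\cdot f,b\rangle=f(ba)$, $\langle f\cdot a,b\rangle=f(ab)$) is inner, i.e. of the form $D(a)=a\cdot f-f\cdot a$ for some $f\in C^*$. *)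

(* Defs.v *)
From HB Require Import structures.
From mathcomp Require Import all_boot all_algebra.
From Stdlib Require Import Reals.
Set Implicit Arguments. Unset Strict Implicit. Unset Printing Implicit Defensive.
Import GRing.Theory.
Local Open Scope ring_scope.

Record absval (K : fieldType) := AbsVal {
  av :> K -> R;
  av_ge0 : forall x, Rle R0 (av x);
  av_eq0 : forall x, av x = R0 <-> x = 0;
  avM : forall x y, av (x * y) = Rmult (av x) (av y);
  avD : forall x y, Rle (av (x + y)) (Rplus (av x) (av y)) }.

Record banach_algebra (K : fieldType) (abs : absval K) := BanachAlgebra {
  ba_sort :> lmodType K;
  ba_mul : ba_sort -> ba_sort -> ba_sort;
  ba_norm : ba_sort -> R;
  ba_mulA : forall x y z, ba_mul x (ba_mul y z) = ba_mul (ba_mul x y) z;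
  ba_mulDl : forall x y z, ba_mul (x + y) z = ba_mul x z + ba_mul y z;
  ba_mulDr : forall x y z, ba_mul x (y + z) = ba_mul x y + ba_mul x z;
  ba_mulZl : forall (k : K) x y, ba_mul (k *: x) y = k *: ba_mul x y;
  ba_mulZr : forall (k : K) x y, ba_mul x (k *: y) = k *: ba_mul x y;
  ba_norm_ge0 : forall x, Rle R0 (ba_norm x);
  ba_norm_eq0 : forall x, ba_norm x = R0 <-> x = 0;
  ba_normD : forall x y, Rle (ba_norm (x + y)) (Rplus (ba_norm x) (ba_norm y));
  ba_normZ : forall (k : K) x, ba_norm (k *: x) = Rmult (abs k) (ba_norm x);
  ba_normM : forall x y, Rle (ba_norm (ba_mul x y)) (Rmult (ba_norm x) (ba_norm y));
  ba_complete : forall u : nat -> ba_sort,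
    (forall eps, Rlt R0 eps -> exists N : nat, forall m n : nat,
        leq N m -> leq N n -> Rlt (ba_norm (u m - u n)) eps) ->
    exists l, forall eps, Rlt R0 eps -> exists N : nat, forall n : nat,
        leq N n -> Rlt (ba_norm (u n - l)) eps }.

Arguments ba_mul {K abs} b _ _.
Arguments ba_norm {K abs} b _.

Definition converges K (abs : absval K) (B : banach_algebra abs)
  (u : nat -> B) (l : B) : Prop :=
  forall eps, Rlt R0 eps -> exists N : nat, forall n : nat,
    leq N n -> Rlt (ba_norm B (u n - l)) eps.

Definition alg_hom K (abs : absval K) (A B : banach_algebra abs) (theta : A -> B) :=
  (forall x y, theta (x + y) = theta x + theta y) /\
  (forall (k : K) x, theta (k *: x) = k *: theta x) /\
  (forall x y, theta (ba_mul A x y) = ba_mul B (theta x) (theta y)).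

Definition norm_le1 K (abs : absval K) (A B : banach_algebra abs) (theta : A -> B) :=
  forall x, Rle (ba_norm B (theta x)) (ba_norm A x).

Record closed_ideal K (abs : absval K) (B : banach_algebra abs) := ClosedIdeal {
  ci_mem :> B -> Prop;
  ci_0 : ci_mem 0;
  ci_D : forall x y, ci_mem x -> ci_mem y -> ci_mem (x + y);
  ci_Z : forall (k : K) x, ci_mem x -> ci_mem (k *: x);
  ci_Ml : forall b x, ci_mem x -> ci_mem (ba_mul B b x);
  ci_Mr : forall b x, ci_mem x -> ci_mem (ba_mul B x b);
  ci_closed : forall (u : nat -> B) l, (forall n, ci_mem (u n)) ->
                converges u l -> ci_mem l }.

Section WeakAmenability.
Variables (K : fieldType) (abs : absval K) (T : Type)
  (add : T -> T -> T) (scale : K -> T -> T) (mul : T -> T -> T) (norm : T -> R).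

Definition in_dual (f : T -> K) : Prop :=
  (forall x y, f (add x y) = f x + f y) /\
  (forall k x, f (scale k x) = k * f x) /\
  (exists M, forall x, Rle (abs (f x)) (Rmult M (norm x))).

(* D : T -> T^*, written curried: D a b = <D(a), b>.
   Module actions: <a.f, b> = f(b a), <f.a, b> = f(a b). *)
Definition bounded_derivation (D : T -> T -> K) : Prop :=
  (forall a, in_dual (D a)) /\
  (forall a b c, D (add a b) c = D a c + D b c) /\
  (forall k a c, D (scale k a) c = k * D a c) /\
  (exists M, forall a c, Rle (abs (D a c)) (Rmult M (Rmult (norm a) (norm c)))) /\
  (forall a b c, D (mul a b) c = D b (mul c a) + D a (mul b c)).

Definition inner_derivation (D : T -> T -> K) : Prop :=
  exists f, in_dual f /\ forall a b, D a b = f (mul b a) - f (mul a b).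

Definition weakly_amenable_ops : Prop :=
  forall D, bounded_derivation D -> inner_derivation D.
End WeakAmenability.

Definition weakly_amenable K (abs : absval K) (A : banach_algebra abs) : Prop :=
  weakly_amenable_ops abs (fun x y : A => x + y) (fun k (x : A) => k *: x)
    (ba_mul A) (ba_norm A).

Section Amalgamation.
Variables (K : fieldType) (abs : absval K) (A B : banach_algebra abs)
  (theta : A -> B) (I : closed_ideal B).

Definition amalg : Type := {p : A * B | I p.2}.

Definition amalg_add (x y : amalg) : amalg :=
  exist _ ((proj1_sig x).1 + (proj1_sig y).1, (proj1_sig x).2 + (proj1_sig y).2)
    (ci_D (proj2_sig x) (proj2_sig y)).

Definition amalg_scale (k : K) (x : amalg) : amalg :=
  exist _ (k *: (proj1_sig x).1, k *: (proj1_sig x).2) (ci_Z k (proj2_sig x)).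

Lemma amalg_mul_mem (x y : amalg) :
  I (ba_mul B (theta (proj1_sig x).1) (proj1_sig y).2 + ba_mul B (proj1_sig x).2 (theta (proj1_sig y).1)
     + ba_mul B (proj1_sig x).2 (proj1_sig y).2).
Proof.
have hx := proj2_sig x; have hy := proj2_sig y.
apply: ci_D; first apply: ci_D.
- exact: ci_Ml.
- exact: ci_Mr.
- exact: ci_Ml.
Qed.

Definition amalg_mul (x y : amalg) : amalg :=
  exist _ (ba_mul A (proj1_sig x).1 (proj1_sig y).1,
           ba_mul B (theta (proj1_sig x).1) (proj1_sig y).2 + ba_mul B (proj1_sig x).2 (theta (proj1_sig y).1)
           + ba_mul B (proj1_sig x).2 (proj1_sig y).2) (amalg_mul_mem x y).

Definition amalg_norm (x : amalg) : R :=
  Rplus (ba_norm A (proj1_sig x).1) (ba_norm B (proj1_sig x).2).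

Definition amalg_weakly_amenable : Prop :=
  weakly_amenable_ops abs amalg_add amalg_scale amalg_mul amalg_norm.
End Amalgamation.

(* Main.v *)
Require Import Defs.
From mathcomp Require Import all_boot all_algebra.
From Stdlib Require Import Reals Lra Psatz ProofIrrelevance.
Local Open Scope ring_scope.

Lemma aux_le (M u v : R) : (0 <= u)%R -> (u <= v)%R -> (M * u <= Rabs M * v)%R.
Proof.
move=> h0 h1; apply: Rle_trans (_ : (Rabs M * u <= _)%R).
- apply: Rmult_le_compat_r => //; exact: Rle_abs.
- apply: Rmult_le_compat_l => //; exact: Rabs_pos.
Qed.

Lemma ba_mul0r K (abs : absval K) (A : banach_algebra abs) (x : A) : ba_mul A 0 x = 0.
Proof.
have := @ba_mulDl _ _ A 0 0 x; rewrite GRing.addr0 => /eqP.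
by rewrite -GRing.subr_eq GRing.subrr eq_sym => /eqP.
Qed.

Lemma ba_mulr0 K (abs : absval K) (A : banach_algebra abs) (x : A) : ba_mul A x 0 = 0.
Proof.
have := @ba_mulDr _ _ A x 0 0; rewrite GRing.addr0 => /eqP.
by rewrite -GRing.subr_eq GRing.subrr eq_sym => /eqP.
Qed.

Lemma ba_norm0 K (abs : absval K) (A : banach_algebra abs) : ba_norm A 0 = 0%R.
Proof. by apply/ba_norm_eq0. Qed.

Theorem corollary6p8 (K : fieldType) (abs : absval K)
  (A B : banach_algebra abs) (theta : A -> B) (I : closed_ideal B) :
  alg_hom theta -> norm_le1 theta ->
  amalg_weakly_amenable theta I -> weakly_amenable A.
Proof.
move=> _ _ HW D [Hdual [HDadd [HDsc [[M HM] HDer]]]].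
pose D' := fun x y : amalg A I => D (proj1_sig x).1 (proj1_sig y).1.
have HB : bounded_derivation abs (@amalg_add K abs A B I) (@amalg_scale K abs A B I)
   (@amalg_mul K abs A B theta I) (@amalg_norm K abs A B I) D'.
  split; [|split; [|split; [|split]]].
  - move=> [[a i] hi]; have [Hda [Hds [Mx HMx]]] := Hdual a.
    split; [|split].
    + by move=> [[c j] hj] [[c' j'] hj']; rewrite /D' /= Hda.
    + by move=> k [[c j] hj]; rewrite /D' /= Hds.
    + exists (Rabs Mx) => [[[c j] hj]]; rewrite /D' /amalg_norm /=.
      apply: Rle_trans (HMx c) _; apply: aux_le; first exact: ba_norm_ge0.
      have := ba_norm_ge0 j; lra.
  - by move=> [[a i] hi] [[b j] hj] [[c l] hl]; rewrite /D' /= HDadd.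
  - by move=> k [[a i] hi] [[c l] hl]; rewrite /D' /= HDsc.
  - exists (Rabs M) => [[[a i] hi]] [[c l] hl]; rewrite /D' /amalg_norm /=.
    apply: Rle_trans (HM a c) _; apply: aux_le.
    + apply: Rmult_le_pos; exact: ba_norm_ge0.
    + have := ba_norm_ge0 a; have := ba_norm_ge0 i; have := ba_norm_ge0 c;
      have := ba_norm_ge0 l; nra.
  - by move=> [[a i] hi] [[b j] hj] [[c l] hl]; rewrite /D' /= HDer.
have [f [[Hfa [Hfs [Mf HMf]]] Hf]] := HW D' HB.
pose mk := fun a : A => (exist _ (a, 0) (ci_0 I) : amalg A I).
have mkeq : forall (p q : A * B) (hp : I p.2) (hq : I q.2), p = q ->
    (exist _ p hp : amalg A I) = exist _ q hq.
  move=> p q hp hq e; subst q; by rewrite (proof_irrelevance _ hp hq).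
exists (fun a => f (mk a)); split; [split; [|split]|].
- move=> x y; rewrite -Hfa; congr f; apply: mkeq => /=; by rewrite GRing.addr0.
- move=> k x; rewrite -Hfs; congr f; apply: mkeq => /=; by rewrite GRing.scaler0.
- exists Mf => x; apply: Rle_trans (HMf (mk x)) _.
  rewrite /amalg_norm /= ba_norm0 Rplus_0_r; exact: Rle_refl.
- move=> a b; have := Hf (mk a) (mk b); rewrite /D' /= => ->.
  congr (f _ - f _); apply: mkeq => /=;
  by rewrite !ba_mulr0 !ba_mul0r !GRing.addr0.
Qed.
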